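(* Let $\alpha\in\mathbb N^n$ and let $\mathcal A=\{u_1,\ldots,u_m\}$ be a set of monomials of $S=K[x_1,\ldots,x_n]$, minimal with respect to divisibility, such that $K[\mathcal A]$ is a homogeneous $K$-algebra. Identify $S$ with $K[x_{11},\ldots,x_{n1}]\subset S^\alpha$ via $x_i\mapsto x_{i1}$, so that $\mathcal A\subseteq\mathcal A^\alpha$ and $S_{\mathcal A}\subseteq S_{\mathcal A^\alpha}$. If $\mathcal G$ is the reduced Gröbner basis of $I_{\mathcal A^\alpha}$ with respect to a term order $<$ on $S_{\mathcal A^\alpha}$, then $\mathcal G\cap S_{\mathcal A}$ is the reduced Gröbner basis of $I_{\mathcal A}$ with respect to the term order on $S_{\mathcal A}$ induced (by restriction) from $<$.
   Context: $\mathbb N$ denotes the positive integers. For $\alpha=(k_1,\ldots,k_n)$, $S^\alpha=K[x_{ij}:1\le i\le n,1\le j\le k_i]$, $\pi:S^\alpha\to S$, $x_{ij}\mapsto x_i$, and $\mathcal A^\alpha$ is the set of monomials $w\in S^\alpha$ with $\pi(w)\in\mathcal A$. For a finite set $\mathcal B$ of monomials, $S_{\mathcal B}=K[y_u:u\in\mathcal B]$ is a polynomial ring, $K[\mathcal B]$ the $K$-algebra generated by $\mathcal B$, and the toric ideal $I_{\mathcal B}$ is the kernel of $S_{\mathcal B}\to K[\mathcal B]$, $y_u\mapsto u$. *)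

(* Defs.v *)
From HB Require Import structures.
From mathcomp Require Import all_boot all_order all_algebra.
From mathcomp Require Import mpoly.

Set Implicit Arguments.
Unset Strict Implicit.
Unset Printing Implicit Defensive.

Import Order.TTheory GRing.Theory.
Local Open Scope ring_scope.

Definition term_order (N : nat) (le : rel 'X_{1..N}) : Prop :=
  [/\ reflexive le, antisymmetric le, transitive le & total le] /\
  (forall mm, le 0%MM mm) /\
  (forall a b c, le a b -> le (a + c)%MM (b + c)%MM).

(* leading (initial) monomial of p w.r.t. le (the le-largest monomial of the
   support; 0 for p = 0) *)
Definition lm (K : fieldType) (N : nat) (le : rel 'X_{1..N})
  (p : {mpoly K[N]}) : 'X_{1..N} :=
  foldr (fun a b => if le a b then b else a) 0%MM (msupp p).

(* G is a Groebner basis of the ideal I w.r.t. le: a finite set of nonzero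
   elements of I whose initial monomials generate in(I). Monomial
   divisibility is the pointwise order (_ <= _)%MM. *)
Definition is_groebner_basis (K : fieldType) (N : nat) (le : rel 'X_{1..N})
  (I : pred {mpoly K[N]}) (G : {mpoly K[N]} -> Prop) : Prop :=
  [/\ exists s : seq {mpoly K[N]}, forall g, G g <-> g \in s,
      (forall g, G g -> I g /\ g != 0) &
      (forall f, I f -> f != 0 -> exists2 g, G g & (lm le g <= lm le f)%MM)].

Definition is_reduced_groebner_basis (K : fieldType) (N : nat)
  (le : rel 'X_{1..N}) (I : pred {mpoly K[N]}) (G : {mpoly K[N]} -> Prop) : Prop :=
  [/\ is_groebner_basis le I G,
      (forall g, G g -> g@_(lm le g) = 1) &
      (forall g g', G g -> G g' -> g <> g' ->
         forall mm, mm \in msupp g -> ~~ (lm le g' <= mm)%MM)].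

Definition toric_ideal (K : fieldType) (N m : nat) (v : 'I_m -> 'X_{1..N}) :
  pred {mpoly K[m]} :=
  fun p => (p \mPo [tuple ('X_[v i] : {mpoly K[N]}) | i < m]) == 0.

Definition homog_comp (K : fieldType) (N : nat) (p : {mpoly K[N]}) (d : nat) :
  {mpoly K[N]} :=
  \sum_(mm <- msupp p | mdeg mm == d) p@_mm *: 'X_[mm].

Definition homogeneous_ideal (K : fieldType) (N : nat) (I : pred {mpoly K[N]}) :
  Prop := forall p d, I p -> I (homog_comp p d).

(* K[A] is a homogeneous K-algebra: K[A] = S_A / I_A with I_A graded for the
   standard grading deg y_u = 1. *)
Definition homogeneous_toric_algebra (K : fieldType) (n m : nat)
  (A : 'I_m -> 'X_{1..n}) : Prop :=
  homogeneous_ideal (@toric_ideal K n m A).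

(* variables x_{ij}, i < n, j < k_i  (0-based indices) *)
Definition var_alpha (n : nat) (k : 'I_n -> nat) : finType :=
  {i : 'I_n & 'I_(k i)}.

Definition mon_alpha (n : nat) (k : 'I_n -> nat) : Type :=
  {ffun var_alpha k -> nat}.

(* the corresponding exponent vector in {mpoly K[#|var_alpha k|]} = S^alpha *)
Definition mon_alpha_mnm (n : nat) (k : 'I_n -> nat) (w : mon_alpha k) :
  'X_{1..#|var_alpha k|} :=
  [multinom w (enum_val j) | j < #|var_alpha k|].

Definition pi_alpha (n : nat) (k : 'I_n -> nat) (w : mon_alpha k) : 'X_{1..n} :=
  [multinom (\sum_(j : 'I_(k i)) w (@Tagged 'I_n i (fun i => 'I_(k i)) j))%N
  | i < n].

Definition iota_alpha (n : nat) (k : 'I_n -> nat) (u : 'X_{1..n}) : mon_alpha k :=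
  [ffun t : var_alpha k => if val (tagged t) == 0%N then u (tag t) else 0%N].

Definition embed_mnm (m M : nat) (f : 'I_m -> 'I_M) (a : 'X_{1..m}) : 'X_{1..M} :=
  [multinom (\sum_(i < m | f i == j) a i)%N | j < M].

Definition embed_poly (K : fieldType) (m M : nat) (f : 'I_m -> 'I_M)
  (p : {mpoly K[m]}) : {mpoly K[M]} :=
  p \mPo [tuple ('X_(f i) : {mpoly K[M]}) | i < m].

Definition induced_order (m M : nat) (f : 'I_m -> 'I_M) (le : rel 'X_{1..M}) :
  rel 'X_{1..m} := fun a b => le (embed_mnm f a) (embed_mnm f b).

(* Main.v *)
Require Import Defs.
From HB Require Import structures.
From mathcomp Require Import all_boot all_order all_algebra.
From mathcomp Require Import mpoly.
Set Implicit Arguments.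
Unset Strict Implicit.
Unset Printing Implicit Defensive.
Import Order.TTheory GRing.Theory.
Local Open Scope ring_scope.

Section LM.
Variables (N : nat) (le : rel 'X_{1..N}) (hle : term_order le).

Definition fo (s : seq 'X_{1..N}) := foldr (fun a b => if le a b then b else a) 0%MM s.
Lemma foE a s : fo (a :: s) = if le a (fo s) then fo s else a. Proof. by []. Qed.

Lemma fo_prop s : fo s \in (0%MM :: s) /\ forall x, x \in s -> le x (fo s).
Proof.
case: hle => [[hr ha ht htot] [h0 _]].
elim: s => [|a s [IH1 IH2]]; first by rewrite /= inE eqxx.
rewrite foE.
case: ifP => hab.
- split; first by move: IH1; rewrite !inE => /orP[->|->]; rewrite ?orbT.
  move=> x; rewrite inE => /orP[/eqP->//|]; exact: IH2.
- split; first by rewrite !inE eqxx orbT.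
  have hba : le (fo s) a by move: (htot a (fo s)); rewrite hab.
  move=> x; rewrite inE => /orP[/eqP->//|/IH2 hx]; exact: ht hx hba.
Qed.

Lemma lm_max (K : fieldType) (p : {mpoly K[N]}) x : x \in msupp p -> le x (lm le p).
Proof. by move=> hx; case: (fo_prop (msupp p)) => _; apply. Qed.

Lemma lm_in (K : fieldType) (p : {mpoly K[N]}) : p != 0 -> lm le p \in msupp p.
Proof.
case: hle => [[hr ha ht htot] [h0 _]].
move=> hp; case: (fo_prop (msupp p)) => H1 H2.
change (fo (msupp p) \in msupp p); move: H1; rewrite inE => /orP[/eqP E|//].
have [x hx] : exists x, x \in msupp p.
  case E2: (msupp p) => [|x s]; first by move: hp; rewrite -msupp_eq0 E2.
  by exists x; rewrite inE eqxx.
have : le x (fo (msupp p)) by apply: H2.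
rewrite E => hx0; have hx0' : x = 0%MM by apply: ha; rewrite hx0 h0.
by rewrite -hx0'.
Qed.

Lemma lm_char (K : fieldType) (p : {mpoly K[N]}) x :
  x \in msupp p -> (forall y, y \in msupp p -> le y x) -> lm le p = x.
Proof.
case: hle => [[hr ha ht htot] [h0 _]].
move=> hx hy; have hp : p != 0 by apply: contraTneq hx => ->; rewrite msupp0.
apply: ha; rewrite hy ?lm_in //; exact: lm_max.
Qed.

Lemma div_le a b : (a <= b)%MM -> le a b.
Proof.
case: hle => [[hr ha ht htot] [h0 hadd]] hab.
by rewrite -(submK hab) -{1}[a]add0m; apply: hadd.
Qed.
End LM.

Lemma comp_mpolyA (R : comRingType) (n k l : nat) (p : {mpoly R[n]})
  (lq : n.-tuple {mpoly R[k]}) (lr : k.-tuple {mpoly R[l]}) :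
  (p \mPo lq) \mPo lr = p \mPo [tuple (tnth lq i \mPo lr) | i < n].
Proof.
rewrite {1}[p]mpolyE (raddf_sum (comp_mpoly lq)) (raddf_sum (comp_mpoly lr)) [in RHS](mpolyE p) (raddf_sum (comp_mpoly _)); apply: eq_bigr => a _.
rewrite /= !comp_mpolyZ !comp_mpolyX rmorph_prod; congr (_ *: _).
by apply: eq_bigr => i _; rewrite rmorphXn tnth_mktuple.
Qed.

Section Embed.
Variables (m M : nat) (f : 'I_m -> 'I_M) (finj : injective f).

Lemma embed_mnmE a i : embed_mnm f a (f i) = a i.
Proof.
rewrite /embed_mnm mnmE (big_pred1 i) // => i' /=.
by rewrite (inj_eq finj).
Qed.

Lemma embed_mnm_out a j : (forall i, f i != j) -> embed_mnm f a j = 0%N.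
Proof. by move=> h; rewrite /embed_mnm mnmE big_pred0 // => i; apply/negbTE. Qed.

Lemma embed_mnm0 : embed_mnm f 0%MM = 0%MM.
Proof. by apply/mnmP => j; rewrite /embed_mnm !mnmE big1 // => i _; rewrite mnm0E. Qed.

Lemma embed_mnmD a b : embed_mnm f (a + b)%MM = (embed_mnm f a + embed_mnm f b)%MM.
Proof. by apply/mnmP => j; rewrite /embed_mnm !mnmE -big_split; apply: eq_bigr => i _; rewrite mnmDE. Qed.

Lemma embed_mnm_case j : (exists i, f i = j) \/ (forall i, f i != j).
Proof.
case: (pickP (fun i => f i == j)) => [i /eqP h|h]; first by left; exists i.
by right => i; rewrite h.
Qed.

Lemma embed_mnm_le a b : (embed_mnm f a <= embed_mnm f b)%MM = (a <= b)%MM.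
Proof.
apply/mnm_lepP/mnm_lepP => h i.
  by have := h (f i); rewrite !embed_mnmE.
case: (embed_mnm_case i) => [[i' <-]|hi]; first by rewrite !embed_mnmE.
by rewrite !embed_mnm_out.
Qed.

Lemma embed_mnm_inj : injective (embed_mnm f).
Proof. by move=> a b h; apply/mnmP => i; rewrite -!embed_mnmE h. Qed.

Lemma embed_poly_X (K : fieldType) a : embed_poly f ('X_[a] : {mpoly K[m]}) = 'X_[embed_mnm f a].
Proof.
rewrite /embed_poly comp_mpolyX.
rewrite (eq_bigr (fun i => 'X_[U_(f i)] ^+ a i)); last by move=> i _; rewrite tnth_mktuple.
rewrite mprodXnE; congr ('X_[_]); apply/mnmP => j.
rewrite mnm_sumE /embed_mnm mnmE [RHS]big_mkcond /=; apply: eq_bigr => i _.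
by rewrite mulmnE mnm1E; case: eqP => _; rewrite ?mul1n ?mul0n.
Qed.


Section EmbedPoly.
Variable (K : fieldType).
Lemma embed_polyE (p : {mpoly K[m]}) :
  embed_poly f p = \sum_(a <- msupp p) p@_a *: 'X_[embed_mnm f a].
Proof.
rewrite /embed_poly comp_mpolyEX; apply: eq_bigr => a _; congr (_ *: _).
exact: embed_poly_X.
Qed.

Lemma mcoeff_embed (p : {mpoly K[m]}) mm :
  (embed_poly f p)@_mm = \sum_(a <- msupp p) p@_a * (embed_mnm f a == mm)%:R.
Proof.
rewrite embed_polyE raddf_sum /=; apply: eq_bigr => a _.
by rewrite mcoeffZ mcoeffX.
Qed.

Lemma mcoeff_embedE (p : {mpoly K[m]}) a : (embed_poly f p)@_(embed_mnm f a) = p@_a.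
Proof.
rewrite mcoeff_embed.
transitivity ((\sum_(b <- msupp p) p@_b *: 'X_[b])@_a); last by rewrite -mpolyE.
rewrite raddf_sum /=; apply: eq_bigr => b _.
by rewrite mcoeffZ mcoeffX (inj_eq (embed_mnm_inj)).
Qed.

Lemma msupp_embed (p : {mpoly K[m]}) mm : mm \in msupp (embed_poly f p) ->
  exists2 a, a \in msupp p & mm = embed_mnm f a.
Proof.
rewrite mcoeff_msupp mcoeff_embed.
case: (boolP (has (fun a => embed_mnm f a == mm) (msupp p))).
  by case/hasP => a ha /eqP <-; exists a.
move=> /hasPn h; rewrite big_seq big1 ?eqxx // => a /h /negbTE ->.
by rewrite mulr0.
Qed.

Lemma embed_msupp (p : {mpoly K[m]}) a : a \in msupp p -> embed_mnm f a \in msupp (embed_poly f p).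
Proof. by rewrite !mcoeff_msupp mcoeff_embedE. Qed.

Lemma embed_poly_inj : injective (@embed_poly K m M f).
Proof. by move=> p q h; apply/mpolyP => a; rewrite -!mcoeff_embedE h. Qed.

Lemma embed_poly0 : embed_poly f (0 : {mpoly K[m]}) = 0.
Proof. exact: comp_mpoly0. Qed.

Lemma embed_polyB (p q : {mpoly K[m]}) : embed_poly f (p - q) = embed_poly f p - embed_poly f q.
Proof. exact: comp_mpolyB. Qed.
End EmbedPoly.

Lemma induced_term_order (le : rel 'X_{1..M}) : term_order le -> term_order (induced_order f le).
Proof.
case=> [[hr ha ht htot] [h0 hadd]]; split; [split|split].
- by move=> a; apply: hr.
- by move=> a b h; apply: embed_mnm_inj; apply: ha.
- by move=> a b c; apply: ht.
- by move=> a b; apply: htot.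
- by move=> a; rewrite /induced_order embed_mnm0.
- by move=> a b c; rewrite /induced_order !embed_mnmD; apply: hadd.
Qed.

Lemma lm_embed (K : fieldType) (le : rel 'X_{1..M}) (hle : term_order le) (p : {mpoly K[m]}) :
  p != 0 -> lm le (embed_poly f p) = embed_mnm f (lm (induced_order f le) p).
Proof.
move=> hp; have hi := induced_term_order hle.
apply: lm_char => //; first by apply: embed_msupp; apply: lm_in.
move=> y /msupp_embed [a ha ->]; exact: (lm_max hi ha).
Qed.

End Embed.

Definition good (N : nat) (Q : pred 'I_N) (a : 'X_{1..N}) := [forall j, (a j != 0%N) ==> Q j].
Definition rtup (K : fieldType) (N : nat) (Q : pred 'I_N) : N.-tuple {mpoly K[N]} :=
  [tuple (if Q j then 'X_j else 0) | j < N].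

Lemma retrX (K : fieldType) (N : nat) (Q : pred 'I_N) (a : 'X_{1..N}) :
  ('X_[a] : {mpoly K[N]}) \mPo rtup K Q = if good Q a then 'X_[a] else 0.
Proof.
rewrite comp_mpolyX /good; case: (boolP [forall j, _]) => [/forallP h|/forallPn [j hj]].
  rewrite [RHS]mpolyXE_id; apply: eq_bigr => j _; rewrite tnth_mktuple.
  case: (boolP (Q j)) => // hq; have := h j; rewrite (negbTE hq) implybF negbK => /eqP ->.
  by rewrite !expr0.
rewrite negb_imply in hj; case/andP: hj => hj hq.
by rewrite (bigD1 j) //= tnth_mktuple (negbTE hq) expr0n (negbTE hj) mul0r.
Qed.

Lemma retr_coef (K : fieldType) (N : nat) (Q : pred 'I_N) (p : {mpoly K[N]}) mm :
  (p \mPo rtup K Q)@_mm = if good Q mm then p@_mm else 0.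
Proof.
rewrite comp_mpolyEX raddf_sum /=.
transitivity (\sum_(a <- msupp p) (if good Q mm then p@_a * (a == mm)%:R else 0)).
  apply: eq_bigr => a _; rewrite mcoeffZ retrX.
  case: (eqVneq a mm) => [->|ha]; first by case: ifP => _; rewrite ?mcoeffX ?mcoeff0 ?eqxx ?mulr0.
  by rewrite mulr0; case: ifP => _; rewrite ?mcoeffX ?mcoeff0 ?(negbTE ha) ?mulr0; case: ifP.
case: ifP => _; last by rewrite big1.
transitivity ((\sum_(b <- msupp p) p@_b *: 'X_[b])@_mm); last by rewrite -mpolyE.
by rewrite raddf_sum /=; apply: eq_bigr => b _; rewrite mcoeffZ mcoeffX.
Qed.

Definition gfirst (n : nat) (k : 'I_n -> nat) (k_pos : forall i, (0 < k i)%N) (i : 'I_n) :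
  'I_#|var_alpha k| :=
  enum_rank (Tagged (fun i => 'I_(k i)) (Ordinal (k_pos i)) : var_alpha k).

Lemma gfirst_inj n k k_pos : injective (@gfirst n k k_pos).
Proof.
move=> i j /enum_rank_inj h.
by have := congr1 (fun t : var_alpha k => tag t) h.
Qed.

Lemma mnm_iota n k k_pos (u : 'X_{1..n}) :
  mon_alpha_mnm (iota_alpha k u) = embed_mnm (@gfirst n k k_pos) u.
Proof.
apply/mnmP => j; rewrite /mon_alpha_mnm mnmE /iota_alpha ffunE.
have [t ->] : exists t, j = enum_rank t by exists (enum_val j); rewrite enum_valK.
rewrite enum_rankK; case: t => i x /=.
case: eqP => hx.
  have -> : x = Ordinal (k_pos i) by apply: val_inj.
  by rewrite -[enum_rank _]/(gfirst k_pos i) embed_mnmE //; apply: gfirst_inj.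
rewrite embed_mnm_out // => i'; apply/negP => /eqP /enum_rank_inj h.
by have := congr1 (fun t : var_alpha k => val (tagged t)) h => /= h'; apply: hx.
Qed.

Lemma toric_transfer (K : fieldType) n k (k_pos : forall i, (0 < k i)%N) m
  (A : 'I_m -> 'X_{1..n}) M (e : 'I_M -> mon_alpha k) (f : 'I_m -> 'I_M)
  (hf : forall i, e (f i) = iota_alpha k (A i)) (h : {mpoly K[m]}) :
  toric_ideal A h = toric_ideal (fun j => mon_alpha_mnm (e j)) (embed_poly f h).
Proof.
rewrite /toric_ideal /embed_poly comp_mpolyA -/(embed_poly _ _).
set g := gfirst k_pos.
set T := [tuple _ | j < M].
have E : [tuple tnth [tuple ('X_(f i) : {mpoly K[M]}) | i < m] i \mPo T | i < m]
       = [tuple embed_poly g ('X_[A i] : {mpoly K[n]}) | i < m].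
  apply: eq_from_tnth => i; rewrite !tnth_mktuple comp_mpolyXU -tnth_nth tnth_mktuple.
  by rewrite hf mnm_iota embed_poly_X.
rewrite E.
have -> : h \mPo [tuple embed_poly g ('X_[A i] : {mpoly K[n]}) | i < m]
   = embed_poly g (h \mPo [tuple ('X_[A i] : {mpoly K[n]}) | i < m]).
  rewrite /embed_poly comp_mpolyA; congr (_ \mPo _).
  by apply: eq_from_tnth => i; rewrite !tnth_mktuple.
by rewrite -(embed_poly0 g K) (inj_eq (@embed_poly_inj _ _ g (@gfirst_inj n k k_pos) K)).
Qed.

Lemma toric_retr (K : fieldType) n k m (A : 'I_m -> 'X_{1..n}) M
  (e : 'I_M -> mon_alpha k) (e_inj : injective e)
  (e_enum : forall w : mon_alpha k,
      (exists j, e j = w) <-> (exists i, pi_alpha w = A i))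
  (f : 'I_m -> 'I_M) (hf : forall i, e (f i) = iota_alpha k (A i)) (p : {mpoly K[M]}) :
  toric_ideal (fun j => mon_alpha_mnm (e j)) p ->
  toric_ideal (fun j => mon_alpha_mnm (e j)) (p \mPo rtup K (fun j => [exists i, f i == j])).
Proof.
rewrite /toric_ideal => /eqP hp; apply/eqP.
set T := [tuple _ | j < M].
set P := (fun j => [exists i, f i == j]).
pose fc := (fun v : 'I_#|var_alpha k| => val (tagged (enum_val v)) == 0%N).
have hPj : forall j, P j = good fc (mon_alpha_mnm (e j)).
  move=> j; apply/idP/idP.
    case/existsP => i /eqP <-; rewrite hf; apply/forallP => v; apply/implyP.
    rewrite /mon_alpha_mnm mnmE /iota_alpha ffunE /fc.
    by case: ifP => // _; rewrite eqxx.
  move/forallP => hg.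
  have hz : forall t : var_alpha k, val (tagged t) != 0%N -> e j t = 0%N.
    move=> t ht; have := hg (enum_rank t).
    by rewrite /mon_alpha_mnm mnmE /fc enum_rankK (negbTE ht) implybF negbK => /eqP.
  have he : e j = iota_alpha k (pi_alpha (e j)).
    apply/ffunP => t; rewrite /iota_alpha ffunE; case: eqP => h0; last by apply: hz; apply/eqP.
    rewrite /pi_alpha mnmE; case: t h0 => i x /= h0.
    rewrite (bigD1 x) //= big1 ?addn0 // => y hy; apply: hz => /=.
    apply: contra hy => /eqP hy0; apply/eqP/val_inj; by rewrite /= hy0 h0.
  have [i hi] : exists i, pi_alpha (e j) = A i by apply/e_enum; exists j.
  by apply/existsP; exists i; apply/eqP/e_inj; rewrite hf -hi -he.
transitivity ((p \mPo T) \mPo rtup K fc); last by rewrite hp comp_mpoly0.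
rewrite !comp_mpolyA; congr (_ \mPo _); apply: eq_from_tnth => j.
rewrite /rtup !tnth_mktuple -/(rtup K fc) retrX -hPj.
by case: ifP => _; rewrite ?comp_mpoly0 // comp_mpolyXU -tnth_nth tnth_mktuple.
Qed.

Definition ptup (K : fieldType) m M (f : 'I_m -> 'I_M) : M.-tuple {mpoly K[m]} :=
  [tuple (\sum_(i < m | f i == j) 'X_i) | j < M].

Lemma embed_proj (K : fieldType) m M (f : 'I_m -> 'I_M) (finj : injective f) (g : {mpoly K[M]}) :
  embed_poly f (g \mPo ptup K f) = g \mPo rtup K (fun j => [exists i, f i == j]).
Proof.
rewrite /embed_poly comp_mpolyA; congr (_ \mPo _); apply: eq_from_tnth => j.
rewrite /rtup /ptup !tnth_mktuple raddf_sum /=.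
case: (pickP (fun i => f i == j)) => [i hi|h].
  rewrite (big_pred1 i); last by move=> i'; rewrite /= -(eqP hi) (inj_eq finj).
  rewrite comp_mpolyXU -tnth_nth tnth_mktuple (eqP hi).
  by have -> : [exists i, f i == j] by apply/existsP; exists i.
rewrite big_pred0 //.
by have -> : [exists i, f i == j] = false by apply/existsP => -[i]; rewrite h.
Qed.

Lemma proj_embed (K : fieldType) m M (f : 'I_m -> 'I_M) (finj : injective f) (h : {mpoly K[m]}) :
  embed_poly f h \mPo ptup K f = h.
Proof.
rewrite /embed_poly comp_mpolyA -[RHS]comp_mpoly_id; congr (_ \mPo _).
apply: eq_from_tnth => i; rewrite /ptup !tnth_mktuple comp_mpolyXU -tnth_nth tnth_mktuple.
by rewrite (big_pred1 i) // => i'; rewrite /= (inj_eq finj).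
Qed.

Lemma key_retr (K : fieldType) M (le : rel 'X_{1..M}) (hle : term_order le)
  (I : pred {mpoly K[M]}) (G : {mpoly K[M]} -> Prop)
  (hG : is_reduced_groebner_basis le I G) (Q : pred 'I_M)
  (hIB : forall p q, I p -> I q -> I (p - q))
  (hIs : forall p, I p -> I (p \mPo rtup K Q)) g :
  G g -> good Q (lm le g) -> g \mPo rtup K Q = g.
Proof.
case: hG => [[_ hmem hgb] _ hred] Gg hgood.
apply/eqP; apply/negPn/negP => hne.
set s := g \mPo rtup K Q; set d := g - s.
have Ig := (hmem g Gg).1.
have Id : I d := hIB _ _ Ig (hIs _ Ig).
have dn0 : d != 0 by rewrite subr_eq0 eq_sym.
have dcoef : forall mm, d@_mm = if good Q mm then 0 else g@_mm.
  by move=> mm; rewrite mcoeffB retr_coef; case: ifP; rewrite ?subrr ?subr0.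
have hin := lm_in hle dn0.
have hgd : ~~ good Q (lm le d).
  by move: hin; rewrite mcoeff_msupp dcoef; case: ifP => //; rewrite eqxx.
have hing : lm le d \in msupp g.
  by move: hin; rewrite !mcoeff_msupp dcoef (negbTE hgd).
case: (hgb d Id dn0) => g' Gg' hdiv.
case: (eqVneq g' g) => [eg|ng].
  subst g'; have l1 := div_le hle hdiv; have l2 := lm_max hle hing.
  case: hle => [[_ ha _ _] _].
  have E : lm le g = lm le d by apply: ha; rewrite l1 l2.
  by move: hgd; rewrite -E hgood.
have hne' : g <> g' by move=> E; rewrite E eqxx in ng.
by move: (hred g g' Gg Gg' hne' _ hing); rewrite hdiv.
Qed.

Theorem proposition2p9 (K : fieldType) (n : nat) (k : 'I_n -> nat)
  (k_pos : forall i, (0 < k i)%N)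
  (m : nat) (A : 'I_m -> 'X_{1..n})
  (A_min : forall i j : 'I_m, i != j -> ~~ (A i <= A j)%MM)
  (A_hom : homogeneous_toric_algebra K A)
  (M : nat) (e : 'I_M -> mon_alpha k) (e_inj : injective e)
  (e_enum : forall w : mon_alpha k,
      (exists j, e j = w) <-> (exists i, pi_alpha w = A i))
  (f : 'I_m -> 'I_M) (hf : forall i, e (f i) = iota_alpha k (A i))
  (le : rel 'X_{1..M}) (hle : term_order le)
  (G : {mpoly K[M]} -> Prop)
  (hG : is_reduced_groebner_basis le
          (@toric_ideal K _ M (fun j => mon_alpha_mnm (e j))) G) :
  is_reduced_groebner_basis (induced_order f le) (@toric_ideal K n m A)
    (fun h => G (embed_poly f h)).
Proof.
set P := (fun j => [exists i, f i == j]).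
have finj : injective f.
  move=> i j h; apply/eqP; apply/contraT => hij.
  have hA : A i = A j.
    apply: (embed_mnm_inj (@gfirst_inj n k k_pos)).
    by rewrite -!mnm_iota -!hf h.
  by move: (A_min _ _ hij); rewrite hA lepm_refl.
set I := @toric_ideal K _ M (fun j => mon_alpha_mnm (e j)).
have hIB : forall p q, I p -> I q -> I (p - q).
  by move=> p q; rewrite /I /toric_ideal => /eqP hp /eqP hq; apply/eqP; rewrite comp_mpolyB hp hq subrr.
have hIs : forall p, I p -> I (p \mPo rtup K P) := toric_retr e_inj e_enum hf.
have hkey := key_retr hle hG hIB hIs.
have hproj := embed_proj finj.
have hT := fun h => @toric_transfer K n k k_pos m A M e f hf h.
case: (hG) => [[[s0 hs0] hmem hgb] hlc hred].
have nz : forall h, G (embed_poly f h) -> h != 0.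
  by move=> h /hmem [_]; apply: contraNneq => ->; rewrite embed_poly0.
have hlm : forall h : {mpoly K[m]}, h != 0 -> lm le (embed_poly f h) = embed_mnm f (lm (induced_order f le) h).
  by move=> h; apply: (@lm_embed m M f finj K le hle).
split; [split| |].
- exists [seq g \mPo ptup K f | g <- s0 & embed_poly f (g \mPo ptup K f) == g].
  move=> h; split.
    move=> Gh; apply/mapP; exists (embed_poly f h); last by rewrite proj_embed.
    rewrite mem_filter (proj_embed finj); apply/andP; split; [exact: eqxx | exact/hs0].
  case/mapP => g; rewrite mem_filter => /andP [/eqP he hg] ->.
  by rewrite he; apply/hs0.
- move=> h Gh; split; last exact: nz h Gh.
  by rewrite /I hT; exact: (hmem _ Gh).1.
- move=> h0 Ih h0n0.
  have Ie : I (embed_poly f h0) by rewrite /I -hT.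
  have en0 : embed_poly f h0 != 0.
    by apply: contra h0n0; rewrite -(embed_poly0 f K) => /eqP /(embed_poly_inj finj) ->.
  case: (hgb _ Ie en0) => g Gg hdiv; rewrite hlm // in hdiv.
  have hgood : good P (lm le g).
    apply/forallP => j; apply/implyP => hj; apply: contraT => hPj.
    have := (mnm_lepP hdiv) j; rewrite embed_mnm_out.
      by rewrite leqn0 (negbTE hj).
    by move=> i; apply/negP => hij; move/negP: hPj; apply; apply/existsP; exists i.
  have gs : g \mPo rtup K P = g := hkey g Gg hgood.
  have Gp : G (embed_poly f (g \mPo ptup K f)) by rewrite hproj gs.
  exists (g \mPo ptup K f) => //.
  by rewrite -(embed_mnm_le finj) -hlm ?(nz _ Gp) // hproj gs.
- by move=> h Gh; rewrite -(mcoeff_embedE finj) -hlm ?nz //; exact: hlc.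
- move=> h h' Gh Gh' hne mm hmm.
  have := hred _ _ Gh Gh' (fun E => hne (embed_poly_inj finj E)) _ (embed_msupp finj hmm).
  by rewrite hlm ?(nz _ Gh') // embed_mnm_le.
Qed.
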